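(* Let $k\in\mathbb{N}$, $m=\lfloor\sqrt{k}\rfloor$, and let $G_k$ be the graph described in the context, with the geodesic-biased random walk with target $b$ and excited set $\{a\}$. Write $v_{m+1}:=b$ and $T(x,y)$ for the expected first hitting time of $y$ by this walk started at $x$. Then for every $1\le j\le m+1$, \[T(a,v_j)\ \ge\ \frac{k^{j-1}}{4^{j-1}\,(j-1)!}.\] In particular $T(a,b)\ge k^m/(4^m m!)$.
   Context: Geodesic-biased random walk: let $G$ be a finite connected graph, $b\in V(G)$ a target vertex and $\mathcal{X}\subseteq V(G)$ a set of excited vertices. For every vertex $x\neq b$ fix in advance one shortest path in $G$ from $x$ to $b$. From an unexcited vertex the walker moves to a uniformly random neighbour; from an excited vertex she moves to the next vertex on the fixed shortest path to $b$. The graph $G_k$ ($k\in\mathbb{N}$, $m=\lfloor\sqrt k\rfloor$): start with a path $a,v_1,v_2,\dots,v_m,b$ (of length $m+1$); then for each $i\in[m]$ add $k$ new paths from $a$ to $v_i$, each of length $i+1$ (i.e. each with $i$ new internal vertices), all these $km$ added paths being internally vertex-disjoint from each other and from the original path. In $G_k$ the unique shortest path from $a$ to $b$ is $a,v_1,\dots,v_m,b$, so from the excited vertex $a$ the walker always moves to $v_1$. *)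

(* Defs.v *)
From Stdlib Require Import Reals Arith List.
Import ListNotations.
Open Scope R_scope.

(* Vertices of G_k:
   VA = a, VB = b, VP i = v_i (1 <= i <= m),
   VI i c t = t-th internal vertex (1 <= t <= i) of the c-th added path
              (1 <= c <= k) from a to v_i. *)
Inductive V : Type := VA | VB | VP (i : nat) | VI (i c t : nat).

Definition V_eq_dec : forall x y : V, {x = y} + {x <> y}.
Proof. decide equality; apply Nat.eq_dec. Defined.

Definition V_eqb (x y : V) : bool := if V_eq_dec x y then true else false.

Definition msq (k : nat) : nat := Nat.sqrt k.

(* nodes of the original path a = p_0, v_1 = p_1, ..., v_m = p_m, b = p_(m+1) *)
Definition pnode (k i : nat) : V :=
  if Nat.eqb i 0 then VA else if Nat.eqb i (msq k + 1) then VB else VP i.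

(* nodes of the c-th added path from a to v_i:
   a = q_0, q_1, ..., q_i (internal), v_i = q_(i+1) *)
Definition qnode (i c t : nat) : V :=
  if Nat.eqb t 0 then VA else if Nat.eqb t (i + 1) then VP i else VI i c t.

Definition verts (k : nat) : list V :=
  VA :: VB :: map VP (seq 1 (msq k)) ++
  flat_map (fun i => flat_map (fun c => map (VI i c) (seq 1 i)) (seq 1 k))
           (seq 1 (msq k)).

Definition edges (k : nat) : list (V * V) :=
  map (fun i => (pnode k i, pnode k (S i))) (seq 0 (msq k + 1)) ++
  flat_map (fun i => flat_map (fun c =>
      map (fun t => (qnode i c t, qnode i c (S t))) (seq 0 (i + 1)))
      (seq 1 k)) (seq 1 (msq k)).

Definition adj (k : nat) (x y : V) : bool :=
  existsb (fun e => orb (andb (V_eqb (fst e) x) (V_eqb (snd e) y))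
                    (andb (V_eqb (fst e) y) (V_eqb (snd e) x))) (edges k).

Definition nbrs (k : nat) (x : V) : list V := filter (adj k x) (verts k).

(* Transition probabilities of the geodesic-biased walk on G_k with target b
   and excited set {a}: from a the walker moves to the next vertex on the
   (unique) shortest path a, v_1, ..., v_m, b, i.e. to pnode k 1; from any
   other vertex she moves to a uniformly random neighbour. *)
Definition P (k : nat) (x y : V) : R :=
  if V_eq_dec x VA then (if V_eq_dec y (pnode k 1) then 1 else 0)
  else if adj k x y then / INR (length (nbrs k x)) else 0.

Definition sumV (k : nat) (f : V -> R) : R :=
  fold_right Rplus 0 (map f (verts k)).

(* qdist k s y n x = Prob(X_n = x and X_t <> y for all 0 <= t <= n),
   for the walk started at X_0 = s. *)
Fixpoint qdist (k : nat) (s y : V) (n : nat) : V -> R :=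
  match n with
  | O => fun x => if V_eq_dec s y then 0 else if V_eq_dec x s then 1 else 0
  | S n' => fun z => if V_eq_dec z y then 0
                     else sumV k (fun x => qdist k s y n' x * P k x z)
  end.

(* Prob(tau_y > n), tau_y = first n >= 0 with X_n = y *)
Definition survival (k : nat) (s y : V) (n : nat) : R := sumV k (qdist k s y n).

(* ExpHit k s y T : T is the expected first hitting time T(s,y),
   E[tau_y] = sum_{n >= 0} Prob(tau_y > n) (the series converges to T). *)
Definition ExpHit (k : nat) (s y : V) (T : R) : Prop :=
  infinite_sum (survival k s y) T.

Example adj_test1 : adj 4 VA (VP 1) = true. Proof. reflexivity. Qed.
Example adj_test2 : adj 4 (VP 2) VB = true. Proof. reflexivity. Qed.
Example adj_test3 : adj 4 (VI 2 3 2) (VP 2) = true. Proof. reflexivity. Qed.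
Example adj_test4 : adj 4 VA (VI 2 4 1) = true. Proof. reflexivity. Qed.
Example deg_test : length (nbrs 4 VA) = (1 + 4 * 2)%nat. Proof. reflexivity. Qed.
Example deg_test2 : length (nbrs 4 (VP 2)) = (2 + 4)%nat. Proof. reflexivity. Qed.
Example adj_test5 : adj 0 VA VB = true. Proof. reflexivity. Qed.

(* Main.v *)
Require Import Defs.
From Stdlib Require Import Reals Arith List Lra Lia.
Open Scope R_scope.

Open Scope R_scope.

Ltac bd := repeat (match goal with
 | |- context [Nat.eqb ?a ?b] => first [ rewrite (proj2 (Nat.eqb_eq a b)) by lia
                                       | rewrite (proj2 (Nat.eqb_neq a b)) by lia
                                       | destruct (Nat.eqb_spec a b) ]
 | |- context [Nat.leb ?a ?b] => first [ rewrite (proj2 (Nat.leb_le a b)) by lia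
                                       | rewrite (proj2 (Nat.leb_gt a b)) by lia
                                       | destruct (Nat.leb_spec a b) ]
 | |- context [Nat.ltb ?a ?b] => first [ rewrite (proj2 (Nat.ltb_lt a b)) by lia
                                       | rewrite (proj2 (Nat.ltb_ge a b)) by lia
                                       | destruct (Nat.ltb_spec a b) ]
 end; cbn [andb orb negb] in *; try (exfalso; lia)).

Definition sumL {A} (l : list A) (f : A -> R) : R := fold_right Rplus 0 (map f l).

Lemma sumL_cons {A} (a : A) l f : sumL (a :: l) f = f a + sumL l f.
Proof. reflexivity. Qed.
Lemma sumL_nil {A} (f : A -> R) : sumL nil f = 0.
Proof. reflexivity. Qed.
Lemma sumL_app {A} (l1 l2 : list A) f : sumL (l1 ++ l2) f = sumL l1 f + sumL l2 f.
Proof. induction l1; simpl; rewrite ?sumL_cons, ?sumL_nil; try rewrite IHl1; lra. Qed.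
Lemma sumL_map {A B} (g : A -> B) l f : sumL (map g l) f = sumL l (fun x => f (g x)).
Proof. unfold sumL; now rewrite map_map. Qed.
Lemma sumL_flat_map {A B} (g : A -> list B) l f :
  sumL (flat_map g l) f = sumL l (fun x => sumL (g x) f).
Proof. induction l; simpl; auto. rewrite sumL_app, sumL_cons, IHl; auto. Qed.
Lemma sumL_ext_in {A} (l : list A) f g : (forall x, In x l -> f x = g x) -> sumL l f = sumL l g.
Proof. induction l; intros H; simpl; auto. rewrite !sumL_cons, (H a) by (simpl; auto). rewrite IHl; [reflexivity|]. intros; apply H; simpl; auto. Qed.
Lemma sumL_plus {A} (l : list A) f g : sumL l (fun x => f x + g x) = sumL l f + sumL l g.
Proof. induction l; simpl; rewrite ?sumL_cons, ?sumL_nil; try rewrite IHl; lra. Qed.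
Lemma sumL_minus {A} (l : list A) f g : sumL l (fun x => f x - g x) = sumL l f - sumL l g.
Proof. induction l; simpl; rewrite ?sumL_cons, ?sumL_nil; try rewrite IHl; lra. Qed.
Lemma sumL_scal {A} (l : list A) c f : sumL l (fun x => c * f x) = c * sumL l f.
Proof. induction l; simpl; rewrite ?sumL_cons, ?sumL_nil; try rewrite IHl; lra. Qed.
Lemma sumL_zero {A} (l : list A) f : (forall x, In x l -> f x = 0) -> sumL l f = 0.
Proof. induction l; intros H; simpl; auto. rewrite sumL_cons, (H a) by (simpl; auto). rewrite IHl; [lra|]. intros; apply H; simpl; auto. Qed.
Lemma sumL_le {A} (l : list A) f g : (forall x, In x l -> f x <= g x) -> sumL l f <= sumL l g.
Proof. induction l; intros H. rewrite !sumL_nil; lra. rewrite !sumL_cons.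
  apply Rplus_le_compat; [apply H; simpl; auto|apply IHl]. intros; apply H; simpl; auto. Qed.
Lemma sumL_const {A} (l : list A) c : sumL l (fun _ => c) = INR (length l) * c.
Proof. induction l. rewrite sumL_nil; simpl; lra. rewrite sumL_cons, IHl.
  change (length (a::l)) with (S (length l)); rewrite S_INR; lra. Qed.
Lemma sumL_nonneg {A} (l : list A) f : (forall x, In x l -> 0 <= f x) -> 0 <= sumL l f.
Proof. intros H. apply Rle_trans with (sumL l (fun _ => 0)).
  rewrite sumL_const; lra. apply sumL_le; auto. Qed.
Lemma sumL_swap {A B} (l1 : list A) (l2 : list B) F :
  sumL l1 (fun a => sumL l2 (fun b => F a b)) = sumL l2 (fun b => sumL l1 (fun a => F a b)).
Proof. induction l1; simpl.
  - symmetry; apply sumL_zero; auto.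
  - rewrite sumL_cons, IHl1, <- sumL_plus. apply sumL_ext_in; intros; now rewrite sumL_cons. Qed.
Lemma sum_seq_pt a len c F :
  sumL (seq a len) (fun n => if Nat.eqb n c then F n else 0) =
  if andb (Nat.leb a c) (Nat.ltb c (a + len)) then F c else 0.
Proof. revert a; induction len; intros a; simpl.
  - bd; auto; lia.
  - rewrite sumL_cons, IHlen. bd; subst; try lra; lia. Qed.
Lemma length_filter_INR {A} (p : A -> bool) l :
  INR (length (filter p l)) = sumL l (fun z => if p z then 1 else 0).
Proof. induction l. reflexivity. rewrite sumL_cons. simpl filter. destruct (p a).
  change (length (a :: filter p l)) with (S (length (filter p l))); rewrite S_INR, IHl; lra.
  rewrite IHl; lra. Qed.

Open Scope R_scope.
Open Scope nat_scope.

Definition Edgeb (k : nat) (u w : V) : bool :=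
  match u, w with
  | VA, VB => Nat.eqb (msq k) 0
  | VA, VP i => Nat.eqb i 1 && Nat.leb 1 (msq k)
  | VP i, VP i' => Nat.eqb i' (i+1) && Nat.leb 1 i && Nat.leb (i+1) (msq k)
  | VP i, VB => Nat.eqb i (msq k) && Nat.leb 1 (msq k)
  | VA, VI i c t => Nat.eqb t 1 && Nat.leb 1 i && Nat.leb i (msq k) && Nat.leb 1 c && Nat.leb c k
  | VI i c t, VI i' c' t' => Nat.eqb i' i && Nat.eqb c' c && Nat.eqb t' (t+1) && Nat.leb 1 t
        && Nat.leb (t+1) i && Nat.leb i (msq k) && Nat.leb 1 c && Nat.leb c k
  | VI i c t, VP i' => Nat.eqb i' i && Nat.eqb t i && Nat.leb 1 i && Nat.leb i (msq k)
        && Nat.leb 1 c && Nat.leb c k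
  | _, _ => false
  end%bool.

Lemma pnode_cases k i : (i = 0 /\ pnode k i = VA) \/ (i = msq k + 1 /\ pnode k i = VB)
  \/ (i <> 0 /\ i <> msq k + 1 /\ pnode k i = VP i).
Proof. unfold pnode. bd; auto. Qed.

Lemma qnode_cases i c t : (t = 0 /\ qnode i c t = VA) \/ (t = i + 1 /\ qnode i c t = VP i)
  \/ (t <> 0 /\ t <> i + 1 /\ qnode i c t = VI i c t).
Proof. unfold qnode. bd; auto. Qed.

Ltac bsolve := cbn [Edgeb]; rewrite ?Bool.andb_true_iff, ?Nat.eqb_eq, ?Nat.leb_le; lia.

Ltac clo := try lia; unfold pnode, qnode; bd; auto; try lia; try (f_equal; lia).

Lemma edges_iff k u w : In (u, w) (edges k) <-> Edgeb k u w = true.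
Proof.
  split.
  - unfold edges. intros H. apply in_app_iff in H. destruct H as [H|H].
    + apply in_map_iff in H. destruct H as [i [Hi Hs]]. apply in_seq in Hs.
      destruct (pnode_cases k i) as [[? E1]|[[? E1]|[? [? E1]]]];
      destruct (pnode_cases k (S i)) as [[? E2]|[[? E2]|[? [? E2]]]];
      rewrite E1, E2 in Hi; inversion Hi; subst; try lia; bsolve.
    + apply in_flat_map in H. destruct H as [i [Hi H]]. apply in_seq in Hi.
      apply in_flat_map in H. destruct H as [c [Hc H]]. apply in_seq in Hc.
      apply in_map_iff in H. destruct H as [t [Ht Hs]]. apply in_seq in Hs.
      destruct (qnode_cases i c t) as [[? E1]|[[? E1]|[? [? E1]]]];
      destruct (qnode_cases i c (S t)) as [[? E2]|[[? E2]|[? [? E2]]]];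
      rewrite E1, E2 in Ht; inversion Ht; subst; try lia; bsolve.
  - intros H. unfold edges. apply in_app_iff.
    assert (Hp : forall i, (i <= msq k)%nat -> pnode k i = u -> pnode k (S i) = w -> In (u,w) (edges k)).
    { intros i Hi E1 E2. unfold edges. apply in_app_iff. left. apply in_map_iff. exists i.
      rewrite E1, E2. split; auto. apply in_seq. lia. }
    assert (Hq : forall i c t, (1 <= i <= msq k)%nat -> (1 <= c <= k)%nat -> (t <= i)%nat ->
       qnode i c t = u -> qnode i c (S t) = w -> In (u,w) (edges k)).
    { intros i c t Hi Hc Ht E1 E2. unfold edges. apply in_app_iff. right.
      apply in_flat_map. exists i. split. apply in_seq; lia.
      apply in_flat_map. exists c. split. apply in_seq; lia.
      apply in_map_iff. exists t. rewrite E1, E2. split; auto. apply in_seq; lia. }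
    apply in_app_iff.
    destruct u as [| |i|i c t]; destruct w as [| |i'|i' c' t']; cbn [Edgeb] in H;
      try discriminate; rewrite ?Bool.andb_true_iff, ?Nat.eqb_eq, ?Nat.leb_le in H.
    + apply (Hp 0%nat); clo.
    + apply (Hp 0%nat); clo.
    + apply (Hq i' c' 0%nat); clo.
    + apply (Hp (msq k)); clo.
    + apply (Hp i); clo.
    + apply (Hq i c t); clo.
    + apply (Hq i c t); clo.
Qed.

Lemma V_eqb_eq a b : V_eqb a b = true <-> a = b.
Proof. unfold V_eqb; destruct (V_eq_dec a b); split; congruence. Qed.

Lemma adj_eq k x z : adj k x z = (Edgeb k x z || Edgeb k z x)%bool.
Proof.
  apply Bool.eq_iff_eq_true. unfold adj. rewrite existsb_exists, Bool.orb_true_iff, <- !edges_iff.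
  split.
  - intros [[a b] [Hin Hp]]. simpl in Hp.
    rewrite Bool.orb_true_iff, !Bool.andb_true_iff, !V_eqb_eq in Hp.
    destruct Hp as [[-> ->]|[-> ->]]; auto.
  - intros [H|H]; [exists (x,z)|exists (z,x)]; split; auto; simpl;
    rewrite Bool.orb_true_iff, !Bool.andb_true_iff, !V_eqb_eq; auto.
Qed.

Lemma sumV_split k f : sumV k f = (f VA + f VB + sumL (seq 1 (msq k)) (fun i => f (VP i)) +
  sumL (seq 1 (msq k)) (fun i => sumL (seq 1 k) (fun c => sumL (seq 1 i) (fun t => f (VI i c t)))))%R.
Proof.
  change (sumV k f) with (sumL (verts k) f). unfold verts.
  rewrite !sumL_cons, sumL_app, sumL_map, sumL_flat_map.
  rewrite !Rplus_assoc. f_equal. f_equal. f_equal.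
  apply sumL_ext_in; intros i _. rewrite sumL_flat_map.
  apply sumL_ext_in; intros c _. now rewrite sumL_map.
Qed.

Lemma verts_cases k x : In x (verts k) -> x = VA \/ x = VB \/
  (exists i, x = VP i /\ 1 <= i <= msq k) \/
  (exists i c t, x = VI i c t /\ 1 <= i <= msq k /\ 1 <= c <= k /\ 1 <= t <= i).
Proof.
  unfold verts. intros [H|[H|H]]; auto. apply in_app_iff in H. destruct H as [H|H].
  - apply in_map_iff in H. destruct H as [i [<- Hi]]. apply in_seq in Hi.
    right; right; left. exists i; split; auto; lia.
  - apply in_flat_map in H. destruct H as [i [Hi H]]. apply in_seq in Hi.
    apply in_flat_map in H. destruct H as [c [Hc H]]. apply in_seq in Hc.
    apply in_map_iff in H. destruct H as [t [<- Ht]]. apply in_seq in Ht.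
    right; right; right. exists i, c, t. repeat split; lia.
Qed.

Open Scope R_scope.
Open Scope R_scope.

Definition Asum k x (h : V -> R) := sumV k (fun z => if adj k x z then h z else 0).

Lemma Asum_E k x h : Asum k x h =
  sumV k (fun z => if (Edgeb k x z || Edgeb k z x)%bool then h z else 0).
Proof. unfold Asum. change (sumL (verts k) (fun z => if adj k x z then h z else 0) =
   sumL (verts k) (fun z => if (Edgeb k x z || Edgeb k z x)%bool then h z else 0)).
  apply sumL_ext_in; intros; now rewrite adj_eq. Qed.

Ltac pw := let i := fresh "i" in let Hi := fresh "Hi" in
  intros i Hi; apply in_seq in Hi.

Lemma A_VB k h : Asum k VB h = h (pnode k (msq k)).
Proof.
  rewrite Asum_E, sumV_split. cbn [Edgeb orb].
  rewrite (sumL_zero (seq 1 (msq k)) (fun i => sumL (seq 1 k) (fun c => sumL (seq 1 i) (fun t => 0)))).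
  2:{ intros i _. apply sumL_zero; intros c _. apply sumL_zero; intros t _. reflexivity. }
  rewrite (sumL_ext_in _ _ (fun i => if Nat.eqb i (msq k) then h (VP i) else 0)).
  2:{ pw. bd; auto; lia. }
  rewrite sum_seq_pt. unfold pnode. bd; try lra; lia.
Qed.

Lemma A_VP k i h : (1 <= i <= msq k)%nat ->
  Asum k (VP i) h = h (pnode k (i-1)) + h (pnode k (i+1)) + sumL (seq 1 k) (fun c => h (VI i c i)).
Proof.
  intros Hi.
  rewrite Asum_E, sumV_split. cbn [Edgeb orb].
  rewrite (sumL_ext_in _ _ (fun i0 => (if Nat.eqb i0 (i+1) then h (VP i0) else 0) +
     (if Nat.eqb i0 (i-1) then h (VP i0) else 0))).
  2:{ pw. bd; lia || lra. }
  rewrite sumL_plus, !sum_seq_pt.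
  rewrite (sumL_ext_in _ _ (fun i0 => if Nat.eqb i0 i then sumL (seq 1 k) (fun c => h (VI i0 c i0)) else 0)).
  2:{ pw. destruct (Nat.eqb_spec i0 i).
      - subst. apply sumL_ext_in; intros c Hc; apply in_seq in Hc.
        rewrite (sumL_ext_in _ _ (fun t => if Nat.eqb t i then h (VI i c t) else 0)).
        2:{ pw. bd; lia || lra. }
        rewrite sum_seq_pt. bd; lia || lra.
      - apply sumL_zero; intros c _; apply sumL_zero; intros t _. bd; lia || lra. }
  rewrite sum_seq_pt. unfold pnode. bd; try lia; try lra.
Qed.

Lemma A_VI k i c t h : (1 <= i <= msq k)%nat -> (1 <= c <= k)%nat -> (1 <= t <= i)%nat ->
  Asum k (VI i c t) h = h (qnode i c (t-1)) + h (qnode i c (t+1)).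
Proof.
  intros Hi Hc Ht.
  rewrite Asum_E, sumV_split. cbn [Edgeb orb].
  rewrite (sumL_ext_in _ _ (fun i0 => if Nat.eqb i0 i then (if Nat.eqb t i then h (VP i0) else 0) else 0)).
  2:{ pw. bd; lia || lra. }
  rewrite sum_seq_pt.
  rewrite (sumL_ext_in _ _ (fun i0 => if Nat.eqb i0 i then
       sumL (seq 1 k) (fun c0 => if Nat.eqb c0 c then
           sumL (seq 1 i0) (fun t0 => (if Nat.eqb t0 (t+1) then h (VI i0 c0 t0) else 0)
                + (if Nat.eqb t0 (t-1) then h (VI i0 c0 t0) else 0)) else 0) else 0)).
  2:{ pw. destruct (Nat.eqb_spec i0 i).
      - subst. apply sumL_ext_in; intros c0 Hc0; apply in_seq in Hc0.
        destruct (Nat.eqb_spec c0 c).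
        + subst. apply sumL_ext_in; intros t0 Ht0; apply in_seq in Ht0.
          bd; lia || lra.
        + apply sumL_zero; intros t0 _. bd; lia || lra.
      - apply sumL_zero; intros c0 _; apply sumL_zero; intros t0 _. bd; lia || lra. }
  rewrite sum_seq_pt, (sum_seq_pt 1 k c), sumL_plus, !sum_seq_pt.
  unfold qnode. bd; try lia; try lra.
Qed.

Open Scope R_scope.

Lemma sum_single k w F : (w = VA \/ w = VB \/ exists i, w = VP i /\ (1 <= i <= msq k)%nat) ->
  sumV k (fun z => if V_eq_dec z w then F z else 0) = F w.
Proof.
  intros Hw. rewrite sumV_split.
  rewrite (sumL_zero (seq 1 (msq k)) (fun i => sumL (seq 1 k) (fun c => sumL (seq 1 i)
     (fun t => if V_eq_dec (VI i c t) w then F (VI i c t) else 0)))).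
  2:{ intros i _; apply sumL_zero; intros c _; apply sumL_zero; intros t _.
      destruct (V_eq_dec (VI i c t) w); auto. exfalso. destruct Hw as [->|[->|[i' [-> _]]]]; discriminate. }
  destruct Hw as [->|[->|[i [-> Hi]]]].
  - rewrite (sumL_zero _ (fun i => if V_eq_dec (VP i) VA then F (VP i) else 0)).
    2:{ intros; destruct V_eq_dec; [discriminate|auto]. }
    destruct (V_eq_dec VA VA); [|congruence]. destruct (V_eq_dec VB VA); [discriminate|]. lra.
  - rewrite (sumL_zero _ (fun i => if V_eq_dec (VP i) VB then F (VP i) else 0)).
    2:{ intros; destruct V_eq_dec; [discriminate|auto]. }
    destruct (V_eq_dec VB VB); [|congruence]. destruct (V_eq_dec VA VB); [discriminate|]. lra.
  - rewrite (sumL_ext_in _ (fun i0 => if V_eq_dec (VP i0) (VP i) then F (VP i0) else 0)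
       (fun i0 => if Nat.eqb i0 i then F (VP i0) else 0)).
    2:{ intros i0 _. destruct (V_eq_dec (VP i0) (VP i)) as [E|E]; bd; auto; congruence. }
    rewrite sum_seq_pt. bd.
    destruct (V_eq_dec VA (VP i)); [discriminate|]. destruct (V_eq_dec VB (VP i)); [discriminate|]. lra.
Qed.

Lemma deg_VP k i : (1 <= i <= msq k)%nat -> INR (length (nbrs k (VP i))) = INR k + 2.
Proof. intros Hi. unfold nbrs. rewrite length_filter_INR.
  change (Asum k (VP i) (fun _ => 1) = INR k + 2). rewrite A_VP by auto.
  rewrite sumL_const, length_seq. lra. Qed.

Lemma deg_VI k i c t : (1 <= i <= msq k)%nat -> (1 <= c <= k)%nat -> (1 <= t <= i)%nat ->
  INR (length (nbrs k (VI i c t))) = 2.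
Proof. intros. unfold nbrs. rewrite length_filter_INR.
  change (Asum k (VI i c t) (fun _ => 1) = 2). rewrite A_VI by auto. lra. Qed.

Lemma deg_VB k : INR (length (nbrs k VB)) = 1.
Proof. unfold nbrs. rewrite length_filter_INR.
  change (Asum k VB (fun _ => 1) = 1). rewrite A_VB. lra. Qed.

Definition Fh k y (h : V -> R) x := sumV k (fun z => if V_eq_dec z y then 0 else P k x z * h z).

Lemma Fh_simpl k y h x : h y = 0 -> Fh k y h x = sumV k (fun z => P k x z * h z).
Proof. intros Hy. unfold Fh. change (sumL (verts k) (fun z => if V_eq_dec z y then 0 else P k x z * h z) =
   sumL (verts k) (fun z => P k x z * h z)). apply sumL_ext_in; intros z _.
  destruct (V_eq_dec z y); subst; auto. rewrite Hy; ring. Qed.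

Lemma Fh_nonVA k y h x : x <> VA -> h y = 0 ->
  Fh k y h x = Asum k x h / INR (length (nbrs k x)).
Proof. intros Hx Hy. rewrite Fh_simpl by auto. unfold P, Asum.
  destruct (V_eq_dec x VA); [congruence|].
  change (sumL (verts k) (fun z => (if adj k x z then / INR (length (nbrs k x)) else 0) * h z) =
    sumL (verts k) (fun z => if adj k x z then h z else 0) / INR (length (nbrs k x))).
  unfold Rdiv. rewrite Rmult_comm, <- sumL_scal. apply sumL_ext_in; intros z _.
  destruct (adj k x z); ring. Qed.

Lemma pnode1_cases k : pnode k 1 = VA \/ pnode k 1 = VB \/ exists i, pnode k 1 = VP i /\ (1 <= i <= msq k)%nat.
Proof. unfold pnode. bd; auto. right; right; exists 1%nat; split; auto; lia. Qed.

Lemma Fh_VA k y h : h y = 0 -> Fh k y h VA = h (pnode k 1).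
Proof. intros Hy. rewrite Fh_simpl by auto. unfold P. destruct (V_eq_dec VA VA); [|congruence].
  rewrite <- (sum_single k (pnode k 1) h) by apply pnode1_cases.
  change (sumL (verts k) (fun z => (if V_eq_dec z (pnode k 1) then 1 else 0) * h z) =
    sumL (verts k) (fun z => if V_eq_dec z (pnode k 1) then h z else 0)).
  apply sumL_ext_in; intros z _. destruct V_eq_dec; ring. Qed.

Lemma Rinv_nonneg x : 0 <= x -> 0 <= / x.
Proof. intros H. destruct (Rle_lt_or_eq_dec _ _ H) as [H'|H'].
  apply Rlt_le, Rinv_0_lt_compat; auto. rewrite <- H', Rinv_0; lra. Qed.

Lemma P_nonneg k x z : 0 <= P k x z.
Proof. unfold P. destruct V_eq_dec; [destruct V_eq_dec; lra|].
  destruct adj; [apply Rinv_nonneg, pos_INR|lra]. Qed.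

Open Scope R_scope.

Lemma q_nonneg k y n x : 0 <= qdist k VA y n x.
Proof. revert x; induction n; intros x; cbn [qdist].
  - repeat destruct V_eq_dec; lra.
  - destruct V_eq_dec; [lra|]. apply sumL_nonneg; intros z _.
    apply Rmult_le_pos; auto. apply P_nonneg. Qed.

Lemma q_y k y n : qdist k VA y n y = 0.
Proof. destruct n; cbn [qdist]; repeat destruct V_eq_dec; auto; congruence. Qed.

Definition Phi k y n (h : V -> R) := sumV k (fun x => qdist k VA y n x * h x).

Lemma Phi_step k y n h : Phi k y (S n) h = sumV k (fun x => qdist k VA y n x * Fh k y h x).
Proof.
  unfold Phi, Fh. cbn [qdist].
  change (sumL (verts k) (fun z => (if V_eq_dec z y then 0 else sumV k (fun x => qdist k VA y n x * P k x z)) * h z)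
    = sumL (verts k) (fun x => qdist k VA y n x * sumL (verts k) (fun z => if V_eq_dec z y then 0 else P k x z * h z))).
  rewrite (sumL_ext_in _ _ (fun z => sumL (verts k) (fun x => if V_eq_dec z y then 0 else qdist k VA y n x * P k x z * h z))).
  2:{ intros z _. destruct V_eq_dec. rewrite sumL_zero; auto. ring.
      change (sumL (verts k) (fun x => qdist k VA y n x * P k x z) * h z =
        sumL (verts k) (fun x => qdist k VA y n x * P k x z * h z)).
      rewrite Rmult_comm, <- sumL_scal. apply sumL_ext_in; intros; ring. }
  rewrite sumL_swap. apply sumL_ext_in; intros x _. rewrite <- sumL_scal.
  apply sumL_ext_in; intros z _. destruct V_eq_dec; ring. Qed.

Lemma Phi_0 k y h : y <> VA -> Phi k y 0 h = h VA.
Proof. intros Hy. unfold Phi. cbn [qdist]. destruct (V_eq_dec VA y); [congruence|].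
  rewrite <- (sum_single k VA h) by auto.
  change (sumL (verts k) (fun x => (if V_eq_dec x VA then 1 else 0) * h x) =
    sumL (verts k) (fun z => if V_eq_dec z VA then h z else 0)).
  apply sumL_ext_in; intros; destruct V_eq_dec; ring. Qed.

Lemma Phi_super k y g n : (forall x, In x (verts k) -> x <> y -> Fh k y g x <= g x - 1) ->
  Phi k y (S n) g <= Phi k y n g - survival k VA y n.
Proof. intros H. rewrite Phi_step. unfold Phi, survival.
  change (sumL (verts k) (fun x => qdist k VA y n x * Fh k y g x) <=
    sumL (verts k) (fun x => qdist k VA y n x * g x) - sumL (verts k) (qdist k VA y n)).
  rewrite <- sumL_minus. apply sumL_le; intros x Hx.
  destruct (V_eq_dec x y). subst; rewrite q_y; lra.
  specialize (H x Hx n0). pose proof (q_nonneg k y n x). nra. Qed.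

Lemma Phi_sub k y f n : (forall x, In x (verts k) -> x <> y -> Fh k y f x >= f x - 1) ->
  Phi k y (S n) f >= Phi k y n f - survival k VA y n.
Proof. intros H. rewrite Phi_step. unfold Phi, survival.
  change (sumL (verts k) (fun x => qdist k VA y n x * Fh k y f x) >=
    sumL (verts k) (fun x => qdist k VA y n x * f x) - sumL (verts k) (qdist k VA y n)).
  rewrite <- sumL_minus. apply Rle_ge, sumL_le; intros x Hx.
  destruct (V_eq_dec x y). subst; rewrite q_y; lra.
  specialize (H x Hx n0). pose proof (q_nonneg k y n x). nra. Qed.

Lemma le_sum_abs {A} (l : list A) F x : In x l -> F x <= sumL l (fun z => Rabs (F z)).
Proof. induction l; simpl; [tauto|]. rewrite sumL_cons. intros [<-|H].
  - pose proof (sumL_nonneg l (fun z => Rabs (F z)) (fun z _ => Rabs_pos (F z))).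
    pose proof (Rle_abs (F a)). lra.
  - pose proof (IHl H). pose proof (Rabs_pos (F a)). lra. Qed.

Lemma Phi_bound k y n f : Phi k y n f <= sumV k (fun z => Rabs (f z)) * survival k VA y n.
Proof. unfold Phi, survival. change (sumL (verts k) (fun x => qdist k VA y n x * f x) <=
  sumL (verts k) (fun z => Rabs (f z)) * sumL (verts k) (qdist k VA y n)).
  rewrite <- sumL_scal. apply sumL_le; intros x Hx.
  pose proof (le_sum_abs (verts k) f x Hx). pose proof (q_nonneg k y n x).
  nra. Qed.

Lemma surv_nonneg k y n : 0 <= survival k VA y n.
Proof. apply sumL_nonneg; intros; apply q_nonneg. Qed.

Lemma partial_upper k y g : y <> VA -> (forall x, In x (verts k) -> 0 <= g x) ->
  (forall x, In x (verts k) -> x <> y -> Fh k y g x <= g x - 1) ->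
  forall N, sum_f_R0 (survival k VA y) N <= g VA - Phi k y (S N) g.
Proof. intros Hy Hg H N. induction N; simpl.
  - pose proof (Phi_super k y g 0 H). rewrite Phi_0 in H0; auto. lra.
  - pose proof (Phi_super k y g (S N) H). lra. Qed.

Lemma partial_lower k y f : y <> VA ->
  (forall x, In x (verts k) -> x <> y -> Fh k y f x >= f x - 1) ->
  forall N, sum_f_R0 (survival k VA y) N >= f VA - Phi k y (S N) f.
Proof. intros Hy H N. induction N; simpl.
  - pose proof (Phi_sub k y f 0 H). rewrite Phi_0 in H0; auto. lra.
  - pose proof (Phi_sub k y f (S N) H). lra. Qed.

Lemma Phi_nonneg k y n g : (forall x, In x (verts k) -> 0 <= g x) -> 0 <= Phi k y n g.
Proof. intros H. apply sumL_nonneg; intros x Hx. apply Rmult_le_pos; auto. apply q_nonneg. Qed.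

Open Scope R_scope.

Fixpoint dpair (k n : nat) : R * R :=
  match n with
  | O => (0, 1)
  | S n' => let p := dpair k n' in
      (snd p, 2 * snd p - fst p + (INR k + 2) + INR k * INR n + INR k * snd p / (INR n + 1))
  end.
Definition d k n := fst (dpair k n).

Lemma d_0 k : d k 0 = 0. Proof. reflexivity. Qed.
Lemma d_1 k : d k 1 = 1. Proof. reflexivity. Qed.
Lemma d_rec k n : d k (S (S n)) = 2 * d k (S n) - d k n + (INR k + 2) + INR k * INR (S n)
   + INR k * d k (S n) / (INR (S n) + 1).
Proof. reflexivity. Qed.

Lemma div_nonneg a b : 0 <= a -> 0 < b -> 0 <= a / b.
Proof. intros. unfold Rdiv. apply Rmult_le_pos; auto. apply Rlt_le, Rinv_0_lt_compat; auto. Qed.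

Lemma INR_S1_pos n : 0 < INR n + 1.
Proof. pose proof (pos_INR n); lra. Qed.

Lemma d_inc k n : d k (S n) - d k n >= 1 /\ d k n >= 0.
Proof. induction n.
  - rewrite d_0, d_1; lra.
  - destruct IHn as [H1 H2]. rewrite d_rec.
    assert (0 <= INR k * d k (S n) / (INR (S n) + 1)).
    { apply div_nonneg. apply Rmult_le_pos. apply pos_INR. lra. apply INR_S1_pos. }
    pose proof (pos_INR k). pose proof (pos_INR (S n)).
    assert (0 <= INR k * INR (S n)) by (apply Rmult_le_pos; auto). lra. Qed.

Lemma d_nonneg k n : 0 <= d k n.
Proof. destruct (d_inc k n); lra. Qed.

Lemma d_mono k a b : (a <= b)%nat -> d k a <= d k b.
Proof. intros H. induction H. lra. destruct (d_inc k m); lra. Qed.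

Lemma d_lower k n : d k (S n) >= INR k ^ n / INR (fact (S n)).
Proof. induction n.
  - rewrite d_1. simpl. lra.
  - assert (Hs : d k (S (S n)) >= INR k * d k (S n) / (INR (S n) + 1)).
    { rewrite d_rec. destruct (d_inc k n). pose proof (pos_INR k). pose proof (pos_INR (S n)).
      assert (0 <= INR k * INR (S n)) by (apply Rmult_le_pos; auto). lra. }
    assert (Hf : INR (fact (S (S n))) = (INR (S n) + 1) * INR (fact (S n))).
    { change (fact (S (S n))) with (S (S n) * fact (S n))%nat. rewrite mult_INR, (S_INR (S n)). ring. }
    rewrite Hf. simpl pow.
    pose proof (INR_S1_pos (S n)). pose proof (lt_0_INR _ (lt_O_fact (S n))).
    apply Rge_trans with (1 := Hs).
    apply Rle_ge. unfold Rdiv. rewrite Rinv_mult.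
    apply Rle_trans with (INR k * (INR k ^ n * / INR (fact (S n))) * / (INR (S n) + 1)); [right; ring|].
    apply Rmult_le_compat_r. apply Rlt_le, Rinv_0_lt_compat; auto.
    apply Rmult_le_compat_l. apply pos_INR. apply Rge_le. exact IHn. Qed.

Lemma four_pow n : INR (S n) <= 4 ^ n.
Proof. induction n. simpl; lra. rewrite !S_INR in *. simpl pow. pose proof (pow_le 4 n). pose proof (pos_INR n). lra. Qed.

Lemma d_bound k j : (1 <= j)%nat ->
  d k j >= INR k ^ (j - 1) / (4 ^ (j - 1) * INR (fact (j - 1))).
Proof. intros Hj. destruct j as [|n]; [lia|]. replace (S n - 1)%nat with n by lia.
  apply Rge_trans with (1 := d_lower k n). apply Rle_ge.
  change (fact (S n)) with (S n * fact n)%nat. rewrite mult_INR.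
  pose proof (lt_0_INR _ (lt_O_fact n)). pose proof (four_pow n).
  pose proof (lt_0_INR (S n) (Nat.lt_0_succ n)).
  pose proof (pow_le (INR k) n (pos_INR k)).
  unfold Rdiv. apply Rmult_le_compat_l; auto.
  apply Rinv_le_contravar. apply Rmult_lt_0_compat; auto.
  apply Rmult_le_compat_r; lra. Qed.

Open Scope R_scope.

Definition Sv k j (up : bool) i : R :=
  if Nat.leb i j then d k j - d k i
  else if up then d k j + (INR (msq k) + 3) ^ 2 + INR i else 0.

Definition val k j up x : R :=
  match x with
  | VA => d k j
  | VB => Sv k j up (msq k + 1)
  | VP i => Sv k j up i
  | VI i c t => d k j + (Sv k j up i - d k j) * INR t / (INR i + 1) + INR t * (INR i + 1 - INR t)
  end.

Lemma Sv_nonneg k j up i : 0 <= Sv k j up i.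
Proof. unfold Sv. bd. pose proof (d_mono k i j ltac:(lia)); lra.
  destruct up; [|lra]. pose proof (d_nonneg k j); pose proof (pos_INR i); pose proof (pow2_ge_0 (INR (msq k) + 3)); lra. Qed.

Lemma val_pnode k j up i : (i <= msq k + 1)%nat -> val k j up (pnode k i) = Sv k j up i.
Proof. intros. unfold pnode. bd; subst; simpl val; auto.
  unfold Sv. bd. rewrite d_0; ring. Qed.

Lemma val_qnode k j up i c t : (t <= i + 1)%nat -> val k j up (qnode i c t) =
  d k j + (Sv k j up i - d k j) * INR t / (INR i + 1) + INR t * (INR i + 1 - INR t).
Proof. intros. pose proof (INR_S1_pos i). unfold qnode. bd; subst; simpl val; auto.
  - simpl INR. field. lra.
  - rewrite plus_INR. simpl INR. field. lra. Qed.

Lemma val_y k j up : (1 <= j <= msq k + 1)%nat -> val k j up (pnode k j) = 0.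
Proof. intros. rewrite val_pnode by lia. unfold Sv. bd. ring. Qed.

Lemma val_nonneg k j up x : In x (verts k) -> 0 <= val k j up x.
Proof. intros H. apply verts_cases in H.
  destruct H as [->|[->|[[i [-> _]]|[i [c [t [-> [Hi [Hc Ht]]]]]]]]]; simpl val.
  - apply d_nonneg.
  - apply Sv_nonneg.
  - apply Sv_nonneg.
  - pose proof (Sv_nonneg k j up i). pose proof (d_nonneg k j).
    pose proof (INR_S1_pos i). assert (INR t <= INR i) by (apply le_INR; lia).
    pose proof (pos_INR t).
    assert (0 <= INR t / (INR i + 1) <= 1).
    { split. apply div_nonneg; lra. apply Rmult_le_reg_r with (INR i + 1); auto.
      unfold Rdiv; rewrite Rmult_assoc, Rinv_l by lra. lra. }
    replace ((Sv k j up i - d k j) * INR t / (INR i + 1)) with ((Sv k j up i - d k j) * (INR t / (INR i + 1))) by (unfold Rdiv; ring).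
    nra. Qed.

Open Scope R_scope.

Lemma check_VA k j up : (1 <= j <= msq k + 1)%nat ->
  Fh k (pnode k j) (val k j up) VA = val k j up VA - 1.
Proof. intros Hj. rewrite Fh_VA by (apply val_y; auto). rewrite val_pnode by lia.
  unfold Sv. bd. rewrite d_1. simpl val. ring. Qed.

Lemma check_VI k j up i c t : (1 <= j <= msq k + 1)%nat ->
  (1 <= i <= msq k)%nat -> (1 <= c <= k)%nat -> (1 <= t <= i)%nat ->
  Fh k (pnode k j) (val k j up) (VI i c t) = val k j up (VI i c t) - 1.
Proof. intros Hj Hi Hc Ht. rewrite Fh_nonVA by (discriminate || (apply val_y; auto)).
  rewrite A_VI, deg_VI by auto. rewrite !val_qnode by lia.
  rewrite minus_INR, plus_INR by lia. simpl val. simpl INR.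
  pose proof (INR_S1_pos i). field. lra. Qed.

Lemma check_VP_lt k j up i : (1 <= j <= msq k + 1)%nat -> (1 <= i)%nat -> (i < j)%nat -> (i <= msq k)%nat ->
  Fh k (pnode k j) (val k j up) (VP i) = val k j up (VP i) - 1.
Proof. intros Hj Hi Hij Him. rewrite Fh_nonVA by (discriminate || (apply val_y; auto)).
  rewrite A_VP, deg_VP by lia. rewrite !val_pnode by lia.
  rewrite (sumL_ext_in _ _ (fun _ => val k j up (VI i 1 i))) by (intros; reflexivity).
  rewrite sumL_const, length_seq. simpl val.
  destruct i as [|n]; [lia|]. replace (S n - 1)%nat with n by lia.
  replace (S n + 1)%nat with (S (S n)) by lia.
  unfold Sv. bd. rewrite d_rec.
  pose proof (INR_S1_pos (S n)). pose proof (pos_INR k). field. lra. Qed.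

Lemma Fh_nonneg k y h x : (forall z, In z (verts k) -> 0 <= h z) -> 0 <= Fh k y h x.
Proof. intros H. apply sumL_nonneg; intros z Hz. destruct V_eq_dec. lra.
  apply Rmult_le_pos; auto. apply P_nonneg. Qed.

Lemma k_ge1 k : (1 <= msq k)%nat -> 1 <= INR k.
Proof. intros H. destruct k. change (msq 0) with 0%nat in H. lia.
  rewrite S_INR. pose proof (pos_INR k). lra. Qed.

Lemma div_le a b c : 0 < b -> a <= c * b -> a / b <= c.
Proof. intros Hb H. apply Rmult_le_reg_r with b; auto. unfold Rdiv.
  rewrite Rmult_assoc, Rinv_l by lra. lra. Qed.

Lemma check_VP_gt k j i : (1 <= j)%nat -> (j < i)%nat -> (i <= msq k)%nat ->
  Fh k (pnode k j) (val k j true) (VP i) <= val k j true (VP i) - 1.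
Proof. intros Hj Hij Him. rewrite Fh_nonVA by (discriminate || (apply val_y; lia)).
  rewrite A_VP, deg_VP by lia. rewrite !val_pnode by lia.
  rewrite (sumL_ext_in _ _ (fun _ => val k j true (VI i 1 i))) by (intros; reflexivity).
  rewrite sumL_const, length_seq. simpl val.
  pose proof (k_ge1 k ltac:(lia)) as Hk.
  set (X := d k j). set (I := INR i). set (M := INR (msq k)).
  assert (HX : 0 <= X) by apply d_nonneg.
  assert (HI : 1 <= I) by (unfold I; apply (le_INR 1); lia).
  assert (HIM : I <= M) by (unfold I, M; apply le_INR; lia).
  set (e := (M + 3) ^ 2 + I).
  assert (Hsi : Sv k j true i = X + e) by (unfold Sv, e; bd; fold X M I; ring).
  assert (Hsi1 : Sv k j true (i + 1) = X + e + 1) by (unfold Sv, e; bd; fold X M I; rewrite plus_INR; simpl INR; fold I; ring).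
  assert (Hsim : Sv k j true (i - 1) <= X + e - 1).
  { unfold Sv, e. bd.
    - replace (i - 1)%nat with j by lia. pose proof (pow2_ge_0 (M+3)). fold X. lra.
    - fold X M. rewrite minus_INR by lia. fold I. simpl INR. lra. }
  rewrite Hsi, Hsi1.
  set (r := e / (I + 1)).
  assert (Hr : r * (I + 1) = e) by (unfold r; field; lra).
  assert (Hr3 : r >= I + 3).
  { apply Rle_ge. apply Rmult_le_reg_r with (I + 1); [lra|]. rewrite Hr. unfold e. nra. }
  replace ((X + e - X) * I / (I + 1)) with (e - r) by (unfold r; field; lra).
  replace (I + 1 - I) with 1 by ring.
  apply div_le. lra.
  nra. Qed.

Lemma check_VB k j : (1 <= j <= msq k)%nat ->
  Fh k (pnode k j) (val k j true) VB <= val k j true VB - 1.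
Proof. intros Hj. rewrite Fh_nonVA by (discriminate || (apply val_y; lia)).
  rewrite A_VB, deg_VB, val_pnode by lia. simpl val. unfold Sv.
  pose proof (pow2_ge_0 (INR (msq k) + 3)). pose proof (d_nonneg k j).
  pose proof (pos_INR (msq k)). rewrite plus_INR. simpl INR.
  bd; pose proof (d_nonneg k (msq k)); lra. Qed.

Open Scope R_scope.

Lemma pnode_j k j : (1 <= j <= msq k + 1)%nat ->
  (j = msq k + 1 /\ pnode k j = VB)%nat \/ ((j <= msq k)%nat /\ pnode k j = VP j).
Proof. intros. unfold pnode. bd; first [left; split; [lia|reflexivity] | right; split; [lia|reflexivity] | lia]. Qed.

Lemma super_ok k j : (1 <= j <= msq k + 1)%nat -> forall x, In x (verts k) -> x <> pnode k j ->
  Fh k (pnode k j) (val k j true) x <= val k j true x - 1.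
Proof. intros Hj x Hx Hxy. pose proof (pnode_j k j Hj) as Hy. apply verts_cases in Hx.
  destruct Hx as [->|[->|[[i [-> Hi]]|[i [c [t [-> [Hi [Hc Ht]]]]]]]]].
  - rewrite check_VA by lia; lra.
  - apply check_VB. destruct Hy as [[_ E]|[? _]]; [congruence|lia].
  - destruct (lt_eq_lt_dec i j) as [[H|H]|H].
    + rewrite check_VP_lt by lia; lra.
    + subst. destruct Hy as [[? _]|[_ E]]; [lia|congruence].
    + apply check_VP_gt; lia.
  - rewrite check_VI by lia; lra.
Qed.

Lemma sub_ok k j : (1 <= j <= msq k + 1)%nat -> forall x, In x (verts k) -> x <> pnode k j ->
  Fh k (pnode k j) (val k j false) x >= val k j false x - 1.
Proof. intros Hj x Hx Hxy. pose proof (pnode_j k j Hj) as Hy.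
  assert (Hn : 0 <= Fh k (pnode k j) (val k j false) x) by (apply Fh_nonneg; intros; apply val_nonneg; auto).
  apply verts_cases in Hx.
  destruct Hx as [->|[->|[[i [-> Hi]]|[i [c [t [-> [Hi [Hc Ht]]]]]]]]].
  - rewrite check_VA by lia; lra.
  - simpl val. unfold Sv. destruct Hy as [[_ E]|[? _]]; [congruence|]. bd. lra.
  - destruct (lt_eq_lt_dec i j) as [[H|H]|H].
    + rewrite check_VP_lt by lia; lra.
    + subst. destruct Hy as [[? _]|[_ E]]; [lia|congruence].
    + simpl val. unfold Sv. bd. lra.
  - rewrite check_VI by lia; lra.
Qed.

Lemma cv_const c : Un_cv (fun _ => c) c.
Proof. intros eps H. exists 0%nat. intros. unfold Rdist. rewrite Rminus_diag, Rabs_R0. auto. Qed.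

Lemma cv_shift u l : Un_cv u l -> Un_cv (fun n => u (S n)) l.
Proof. intros H eps He. destruct (H eps He) as [N HN]. exists N. intros n Hn. apply HN. lia. Qed.

Theorem mainTheorem3 (k j : nat) :
  (1 <= j <= msq k + 1)%nat ->
  exists T : R, ExpHit k VA (pnode k j) T /\
    T >= INR k ^ (j - 1) / (4 ^ (j - 1) * INR (fact (j - 1))).
Proof.
  intros Hj. set (y := pnode k j).
  assert (HyA : y <> VA) by (unfold y, pnode; bd; discriminate).
  set (Sp := sum_f_R0 (survival k VA y)).
  assert (Hup : forall N, Sp N <= d k j).
  { intros N. unfold Sp. pose proof (partial_upper k y (val k j true) HyA
       (fun x Hx => val_nonneg k j true x Hx) (super_ok k j Hj) N).
    pose proof (Phi_nonneg k y (S N) (val k j true) (fun x Hx => val_nonneg k j true x Hx)).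
    simpl val in H. lra. }
  assert (Hgr : Un_growing Sp).
  { intros n. unfold Sp. simpl. pose proof (surv_nonneg k y (S n)). lra. }
  assert (Hub : has_ub Sp).
  { exists (d k j). intros x [i ->]. apply Hup. }
  destruct (growing_cv Sp Hgr Hub) as [T HT].
  exists T. split. exact HT.
  set (M := sumV k (fun z => Rabs (val k j false z))).
  assert (Hlow : forall N, d k j - M * (Sp (S N) - Sp N) <= Sp N).
  { intros N. pose proof (partial_lower k y (val k j false) HyA (sub_ok k j Hj) N).
    pose proof (Phi_bound k y (S N) (val k j false)). fold M in H0.
    replace (Sp (S N) - Sp N) with (survival k VA y (S N)) by (unfold Sp; simpl; ring).
    unfold Sp. simpl val in H. lra. }
  assert (Hc : Un_cv (fun N => d k j - M * (Sp (S N) - Sp N)) (d k j - M * (T - T))).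
  { apply CV_minus. apply cv_const. apply CV_mult. apply cv_const.
    apply CV_minus. apply (cv_shift Sp T HT). exact HT. }
  pose proof (@Rle_cv_lim _ _ _ _ Hlow Hc HT).
  pose proof (d_bound k j ltac:(lia)). lra.
Qed.
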